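(* Let $R$ be a semi-local arithmetic ring. Then $\lambda\text{-}\dim(R)\le 2$, and $R$ is coherent if and only if $R_M$ is coherent for every maximal ideal $M$ of $R$.
   Context: All rings are commutative with identity. Semi-local means finitely many maximal ideals. $R$ is arithmetic if $R_M$ is a valuation ring (ideals totally ordered by inclusion) for every maximal ideal $M$. For an $R$-module $E$, $\lambda_R(E)$ is the supremum of the $n$ for which there is an exact sequence $F_n\to\cdots\to F_0\to E\to0$ with $F_i$ free of finite rank ($-1$ if $E$ is not finitely generated); $\lambda\text{-}\dim(R)$ is the least $n$ (or $\infty$) such that $\lambda_R(E)\ge n$ implies $\lambda_R(E)=\infty$ for all $R$-modules $E$. *)

(* Defs.v *)
From HB Require Import structures.
From mathcomp Require Import all_boot all_order all_algebra.
Set Implicit Arguments. Unset Strict Implicit. Unset Printing Implicit Defensive.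
Import GRing.Theory.
Local Open Scope ring_scope.

Definition is_ideal (R : comPzRingType) (I : R -> Prop) : Prop :=
  [/\ I 0, (forall x y, I x -> I y -> I (x + y)) & (forall r x, I x -> I (r * x))].

Definition is_maximal_ideal (R : comPzRingType) (M : R -> Prop) : Prop :=
  [/\ is_ideal M, ~ M 1 &
      forall J : R -> Prop, is_ideal J -> (forall x, M x -> J x) ->
        ~ J 1 -> forall x, J x -> M x].

Definition semi_local (R : comPzRingType) : Prop :=
  exists (n : nat) (Ms : 'I_n -> R -> Prop),
    forall M, is_maximal_ideal M -> exists i, forall x, M x <-> Ms i x.

Definition valuation_ring (S : comPzRingType) : Prop :=
  forall I J : S -> Prop, is_ideal I -> is_ideal J ->
    (forall x, I x -> J x) \/ (forall x, J x -> I x).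

(* phi : R -> S is a localization of R at the prime ideal M, i.e. at the
   multiplicative set R \ M (characterized up to isomorphism by the usual
   universal data). *)
Definition is_localization_at (R S : comPzRingType) (M : R -> Prop)
    (phi : {rmorphism R -> S}) : Prop :=
  [/\ (forall s, ~ M s -> exists t, phi s * t = 1),
      (forall y : S, exists a s, ~ M s /\ y * phi s = phi a) &
      (forall a, phi a = 0 -> exists s, ~ M s /\ s * a = 0)].

Definition arithmetic (R : comPzRingType) : Prop :=
  forall M : R -> Prop, is_maximal_ideal M ->
    forall (S : comPzRingType) (phi : {rmorphism R -> S}),
      is_localization_at M phi -> valuation_ring S.

(* lambda_ge_sub E P n : the submodule P of E (viewed as a module) admits an
   exact sequence F_n -> ... -> F_1 -> F_0 -> P -> 0 with F_i = R^(k i) free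
   of finite rank; the map F_(i+1) -> F_i is x |-> x *m A i, and the map
   F_0 -> P is f (a linear map into E with image exactly P). *)
Definition lambda_ge_sub (R : comPzRingType) (E : lmodType R) (P : E -> Prop)
    (n : nat) : Prop :=
  exists (k : nat -> nat) (A : forall i, 'M[R]_(k i.+1, k i))
         (f : 'rV[R]_(k 0) -> E),
  [/\ linear f,
      (forall x, P (f x)),
      (forall y, P y -> exists x, f x = y),
      ((0 < n)%N -> forall x : 'rV[R]_(k 0),
          f x = 0 <-> exists z : 'rV[R]_(k 1), x = z *m A 0) &
      (forall i, (i.+1 < n)%N -> forall x : 'rV[R]_(k i.+1),
          x *m A i = 0 <-> exists z : 'rV[R]_(k i.+2), x = z *m A i.+1)].

Definition lambda_ge (R : comPzRingType) (E : lmodType R) (n : nat) : Prop :=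
  @lambda_ge_sub R E (fun _ => True) n.

Definition lambda_inf (R : comPzRingType) (E : lmodType R) : Prop :=
  forall n, @lambda_ge R E n.

Definition lambda_dim_prop (R : comPzRingType) (n : nat) : Prop :=
  forall E : lmodType R, @lambda_ge R E n -> @lambda_inf R E.

(* lambda-dim(R) <= d : the least n with lambda_dim_prop is <= d *)
Definition lambda_dim_le (R : comPzRingType) (d : nat) : Prop :=
  exists n, (n <= d)%N /\ lambda_dim_prop R n.

Definition fg_ideal (R : comPzRingType) (I : R -> Prop) : Prop :=
  exists (k : nat) (a : 'I_k -> R),
    forall x, I x <-> exists c : 'I_k -> R, x = \sum_(i < k) c i * a i.

Definition finitely_presented_sub (R : comPzRingType) (E : lmodType R)
    (P : E -> Prop) : Prop := @lambda_ge_sub R E P 1.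

Definition coherent (R : comPzRingType) : Prop :=
  forall I : R -> Prop, fg_ideal I -> @finitely_presented_sub R R^o I.

(* Main.v *)
Require Import Defs.
From HB Require Import structures.
From mathcomp Require Import all_boot all_order all_algebra all_fingroup.
From mathcomp Require Import boolp classical_sets ring generic_quotient.
Set Implicit Arguments. Unset Strict Implicit. Unset Printing Implicit Defensive.
Import GRing.Theory.
Local Open Scope ring_scope.

Section MatA.
Variable R : comPzRingType.

Definition isker p q r (B : 'M[R]_(p,q)) (C : 'M[R]_(r,p)) :=
  forall x : 'rV_p, x *m B = 0 <-> exists z : 'rV_r, x = z *m C.
Definition kerfg p q (B : 'M[R]_(p,q)) := exists r (C : 'M[R]_(r,p)), isker B C.

Lemma mx_choice r s (P : 'I_r -> 'rV[R]_s -> Prop) :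
  (forall i, exists z, P i z) -> exists U : 'M[R]_(r,s), forall i, P i (row i U).
Proof.
move=> H; pose f i := projT1 (cid (H i)).
exists (\matrix_(i, j) f i 0 j) => i.
have -> : row i (\matrix_(i, j) f i 0 j) = f i.
  by apply/rowP => j; rewrite !mxE.
exact: (projT2 (cid (H i))).
Qed.

Lemma rows_in r s p (C : 'M[R]_(r,p)) (C' : 'M[R]_(s,p)) :
  (forall x : 'rV_p, (exists z : 'rV_r, x = z *m C) -> exists z : 'rV_s, x = z *m C') ->
  exists U, C = U *m C'.
Proof.
move=> H.
have [U HU] : exists U : 'M[R]_(r,s), forall i, row i C = row i U *m C'.
  apply: (mx_choice (P := fun i z => row i C = z *m C')) => i; apply: H; exists (delta_mx 0 i); by rewrite -rowE.
exists U; apply/row_matrixP => i; by rewrite row_mul HU.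
Qed.

Lemma kerfg_im r s p (C : 'M[R]_(r,p)) (C' : 'M[R]_(s,p)) :
  (forall x : 'rV_p, (exists z : 'rV_r, x = z *m C) <-> (exists z : 'rV_s, x = z *m C')) ->
  kerfg C' -> kerfg C.
Proof.
move=> H [t [G HG]].
have [U HU] := rows_in (fun x => proj1 (H x)).
have [V HV] := rows_in (fun x => proj2 (H x)).
exists (r + t)%N, (col_mx ((1%:M : 'M_r) - U *m V) (G *m V)) => x; split.
- move=> xC.
  have : (x *m U) *m C' = 0 by rewrite -mulmxA -HU.
  move=> /HG [z Hz].
  exists (row_mx x z); rewrite mul_row_col mulmxBr mulmx1 mulmxA -Hz.
  by rewrite mulmxA subrK.
- move=> [z ->]; rewrite -[z]hsubmxK mul_row_col mulmxDl -!mulmxA.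
  rewrite mulmxBl mul1mx -(mulmxA U) -HV -HU subrr mulmx0 add0r.
  suff -> : G *m C' = 0 by rewrite mulmx0.
  apply/row_matrixP => i; rewrite row_mul row0; apply/HG; exists (delta_mx 0 i).
  by rewrite -rowE.
Qed.
End MatA.

Section Val.
Variable S : comPzRingType.
Hypothesis tot : forall a b : S, (exists r, a = r * b) \/ (exists r, b = r * a).

Definition unit_el (u : S) := exists w, u * w = 1.

Lemma nonunit_mull (t r : S) : ~ unit_el r -> ~ unit_el (t * r).
Proof. by move=> H [w Hw]; apply: H; exists (t * w); rewrite mulrA [r * t]mulrC. Qed.

Lemma nonunit_add (x y : S) : ~ unit_el x -> ~ unit_el y -> ~ unit_el (x + y).
Proof.
move=> Hx Hy; have [[r ->]|[r ->]] := tot x y.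
- by rewrite -{2}[y]mul1r -mulrDl; apply: nonunit_mull.
- by rewrite -{1}[x]mul1r -mulrDl; apply: nonunit_mull.
Qed.

Lemma unit_1sub (t r : S) : ~ unit_el r -> unit_el (1 - t * r).
Proof.
move=> Hr; apply: contrapT => H.
have := nonunit_add H (nonunit_mull (t:=t) Hr); rewrite subrK.
by apply; exists 1; rewrite mulr1.
Qed.

Lemma ann_ann (d e : S) : (forall x, x * d = 0 <-> exists r, x = r * e) ->
  exists g, forall x, x * e = 0 <-> exists r, x = r * g.
Proof.
move=> He.
have ed : e * d = 0 by apply/He; exists 1; rewrite mul1r.
have [[c [ce nc]]|] := pselect (exists c, c * e = 0 /\ ~ exists r, c = r * d); last first.
  move=> N; exists d => x; split.
  - move=> xe; apply: contrapT => nx; apply: N; exists x; split => //.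
  - by move=> [r ->]; rewrite -mulrA [d * e]mulrC ed mulr0.
have [[r cr]|[r dr]] := tot c d.
  by exfalso; apply: nc; exists r.
have nr : ~ unit_el r.
  move=> [w rw]; apply: nc; exists w; rewrite dr mulrA [w * r]mulrC rw mul1r //.
have [[s es]|[s rs]] := tot e r.
-
  have sd : s * d = 0 by rewrite dr mulrA -es mulrC ce.
  have [t st] := proj1 (He s) sd.
  have e0 : e = 0.
    have [w Hw] := unit_1sub t nr.
    have : e * (1 - t * r) = 0.
      by rewrite mulrBr mulr1 mulrA [e * t]mulrC -st -es subrr.
    by move=> H; rewrite -[e]mulr1 -Hw mulrA H mul0r.
  exists 1 => x; split; first by move=> _; exists x; rewrite mulr1.
  by move=> _; rewrite e0 mulr0.
-
  have d0 : d = 0 by rewrite dr rs -mulrA [e * c]mulrC ce mulr0.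
  have [w Hw] : exists w, 1 = w * e by apply/He; rewrite d0 mulr0.
  exists 0 => x; split.
  + move=> xe; exists 0; rewrite mulr0.
    by rewrite -[x]mulr1 Hw mulrCA xe mulr0.
  + by move=> [y ->]; rewrite mulr0 mul0r.
Qed.


Lemma princ s (v : 'I_s -> S) : exists e, forall x,
  (exists z : 'I_s -> S, x = \sum_(i < s) z i * v i) <-> exists r, x = r * e.
Proof.
elim: s v => [|s IH] v.
  exists 0 => x; split.
  - by move=> [z ->]; exists 0; rewrite big_ord0 mulr0.
  - by move=> [r ->]; exists (fun _ => 0); rewrite big_ord0 mulr0.
have [e He] := IH (fun i => v (lift ord0 i)).
have [[r er]|[r ver]] := tot e (v ord0).
- exists (v ord0) => x; split.
  + move=> [z ->]; rewrite big_ord_recl.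
    have [r' Hr'] := proj1 (He (\sum_(i < s) z (lift ord0 i) * v (lift ord0 i)))
      (ex_intro _ (fun i => z (lift ord0 i)) erefl).
    by exists (z ord0 + r' * r); rewrite Hr' er mulrA -mulrDl.
  + move=> [r' ->]; exists (fun i => if i == ord0 then r' else 0).
    rewrite big_ord_recl eqxx big1 ?addr0 // => i _.
    by rewrite eq_sym (negbTE (neq_lift _ _)) mul0r.
- exists e => x; split.
  + move=> [z ->]; rewrite big_ord_recl.
    have [r' Hr'] := proj1 (He (\sum_(i < s) z (lift ord0 i) * v (lift ord0 i)))
      (ex_intro _ (fun i => z (lift ord0 i)) erefl).
    by exists (z ord0 * r + r'); rewrite Hr' ver mulrA -mulrDl.
  + move=> [r' Hx]; have [z Hz] := proj2 (He x) (ex_intro _ r' Hx).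
    exists (fun i => if unlift ord0 i is Some j then z j else 0).
    rewrite big_ord_recl unlift_none mul0r add0r Hz.
    by apply: eq_bigr => i _; rewrite liftK.
Qed.

Lemma piv n (f : 'I_n.+1 -> S) : exists i, forall j, exists r, f j = r * f i.
Proof.
elim: n f => [|n IH] f.
  by exists ord0 => j; exists 1; rewrite mul1r (ord1 j).
have [i Hi] := IH (fun j => f (lift ord0 j)).
have [[r er]|[r er]] := tot (f ord0) (f (lift ord0 i)).
- exists (lift ord0 i) => j; case: (unliftP ord0 j) => [j' ->|->]; first exact: Hi.
  by exists r.
- exists ord0 => j; case: (unliftP ord0 j) => [j' ->|->]; last by exists 1; rewrite mul1r.
  by have [r' ->] := Hi j'; exists (r' * r); rewrite er mulrA.
Qed.

End Val.

Section Inv.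
Variable S : comPzRingType.
Definition invx n (A : 'M[S]_n) := exists A', A *m A' = 1%:M /\ A' *m A = 1%:M.

Lemma invx_mul n (A B : 'M[S]_n) : invx A -> invx B -> invx (A *m B).
Proof.
move=> [A' [H1 H2]] [B' [H3 H4]]; exists (B' *m A'); split.
- by rewrite mulmxA -(mulmxA A) H3 mulmx1 H1.
- by rewrite mulmxA -(mulmxA B') H2 mulmx1 H4.
Qed.

Lemma invx_tperm n (i j : 'I_n) : invx (tperm_mx i j : 'M[S]_n).
Proof. by exists (tperm_mx i j); rewrite -perm_mxM tperm2 perm_mx1. Qed.

Lemma invx_blk m n (P : 'M[S]_n) : invx P -> invx (block_mx (1%:M : 'M_m) 0 0 P).
Proof.
move=> [P' [H1 H2]]; exists (block_mx 1%:M 0 0 P'); rewrite !mulmx_block.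
by rewrite ?mulmx0 ?mul0mx ?mulmx1 ?mul1mx ?addr0 ?add0r H1 H2 -!scalar_mx_block.
Qed.

Lemma invx_low m n (X : 'M[S]_(n, m)) : invx (block_mx (1%:M : 'M_m) 0 X 1%:M).
Proof.
exists (block_mx 1%:M 0 (- X) 1%:M); rewrite !mulmx_block.
rewrite ?mulmx0 ?mul0mx ?mulmx1 ?mul1mx ?addr0 ?add0r ?addrN ?addNr.
by rewrite -!scalar_mx_block.
Qed.

Lemma invx_up m n (X : 'M[S]_(m, n)) : invx (block_mx (1%:M : 'M_m) X 0 1%:M).
Proof.
exists (block_mx 1%:M (- X) 0 1%:M); rewrite !mulmx_block.
rewrite ?mulmx0 ?mul0mx ?mulmx1 ?mul1mx ?addr0 ?add0r ?addrN ?addNr.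
by rewrite -!scalar_mx_block.
Qed.

Definition diagmx m n (D : 'M[S]_(m,n)) := forall (i : 'I_m) (j : 'I_n), (i : nat) <> j -> D i j = 0.

Lemma mx_choice2 m n (P : 'I_m -> 'I_n -> S -> Prop) :
  (forall i j, exists r, P i j r) -> exists M : 'M[S]_(m,n), forall i j, P i j (M i j).
Proof.
move=> H; pose f i j := projT1 (cid (H i j)).
exists (\matrix_(i, j) f i j) => i j; rewrite mxE; exact: (projT2 (cid (H i j))).
Qed.

End Inv.

Section Smith.
Variable S : comPzRingType.
Hypothesis tot : forall a b : S, (exists r, a = r * b) \/ (exists r, b = r * a).

Lemma pivmx m n (B : 'M[S]_(m.+1, n.+1)) :
  exists i0 j0, forall i j, exists r, B i j = r * B i0 j0.
Proof.
have H : forall i, exists j, forall j', exists r, B i j' = r * B i j.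
  by move=> i; apply: (piv tot (fun j => B i j)).
pose J i := projT1 (cid (H i)).
have HJ i : forall j', exists r, B i j' = r * B i (J i) := projT2 (cid (H i)).
have [i0 Hi0] := piv tot (fun i => B i (J i)).
exists i0, (J i0) => i j.
have [r1 ->] := HJ i j; have [r2 /= ->] := Hi0 i.
by exists (r1 * r2); rewrite mulrA.
Qed.

Lemma smith m n (B : 'M[S]_(m, n)) :
  exists P Q, [/\ invx P, invx Q & diagmx (P *m B *m Q)].
Proof.
elim: m n B => [|m IH] n B.
  exists 1%:M, 1%:M; split; try by exists 1%:M; rewrite mulmx1.
  by move=> [].
case: n B => [|n] B.
  exists 1%:M, 1%:M; split; try by exists 1%:M; rewrite mulmx1.
  by move=> i [].
have [i0 [j0 Hdiv]] := pivmx B.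
pose B1 : 'M[S]_(1 + m, 1 + n) := tperm_mx 0 i0 *m B *m tperm_mx 0 j0.
have B1E i j : B1 i j = B (tperm 0 i0 i) (tperm 0 j0 j).
  by rewrite /B1 -xrowE -xcolE !mxE.
have B1def : B1 = tperm_mx 0 i0 *m B *m tperm_mx 0 j0 by [].
clearbody B1.
pose b1 : 'M[S]_1 := ulsubmx B1.
have l0 k : lshift k (0 : 'I_1) = 0 :> 'I_(1 + k) by apply: val_inj.
have b1E : b1 0 0 = B i0 j0.
  by rewrite /b1 /ulsubmx /lsubmx /usubmx !mxE B1E !l0 !tpermL.
have Hd1 : forall i j, exists r, B1 i j = r * b1 0 0.
  by move=> i j; rewrite b1E B1E; apply: Hdiv.
have [Rm HRm] := mx_choice2 (P := fun i j r => B1 i j = r * b1 0 0) Hd1.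
pose g : 'M[S]_(m, 1) := dlsubmx Rm.
pose rh : 'M[S]_(1, n) := ursubmx Rm.
have dlE : dlsubmx B1 = g *m b1.
  apply/matrixP => i k; rewrite (ord1 k) !mxE big_ord1 !mxE HRm.
  by rewrite /b1 !mxE.
have urE : ursubmx B1 = b1 *m rh.
  apply/matrixP => k j; rewrite (ord1 k) !mxE big_ord1 !mxE HRm.
  by rewrite /b1 !mxE mulrC.
pose L : 'M[S]_(1 + m) := block_mx 1%:M 0 (- g) 1%:M.
pose U : 'M[S]_(1 + n) := block_mx 1%:M (- rh) 0 1%:M.
pose B3 := drsubmx B1 - g *m ursubmx B1.
have LBU : L *m B1 *m U = block_mx b1 0 0 B3.
  rewrite /L /U -[B1]submxK !mulmx_block.
  rewrite ?mulmx0 ?mul0mx ?mulmx1 ?mul1mx ?addr0 ?add0r.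
  rewrite -/b1 urE dlE mulmxN !mulNmx !addNr mul0mx add0r addrC /B3 urE.
  done.
have [P3 [Q3 [iP3 iQ3 dD3]]] := IH n B3.
exists (block_mx (1%:M : 'M_1) 0 0 P3 *m L *m tperm_mx 0 i0).
exists (tperm_mx 0 j0 *m U *m block_mx (1%:M : 'M_1) 0 0 Q3).
split.
- apply: invx_mul; [apply: invx_mul|apply: invx_tperm]; [exact: (@invx_blk _ 1 m P3 iP3)|exact: (@invx_low _ 1 m (- g))].
- apply: invx_mul; [apply: invx_mul|exact: (@invx_blk _ 1 n Q3 iQ3)]; [apply: invx_tperm|exact: (@invx_up _ 1 n (- rh))].
have -> : block_mx (1%:M : 'M_1) 0 0 P3 *m L *m tperm_mx 0 i0 *m B *m
   (tperm_mx 0 j0 *m U *m block_mx (1%:M : 'M_1) 0 0 Q3) =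
   block_mx (1%:M : 'M_1) 0 0 P3 *m (L *m B1 *m U) *m block_mx (1%:M : 'M_1) 0 0 Q3.
  by rewrite B1def !mulmxA.
rewrite LBU !mulmx_block ?mulmx0 ?mul0mx ?mulmx1 ?mul1mx ?addr0 ?add0r.
move=> i j; rewrite -[i](@splitK 1 m) -[j](@splitK 1 n).
case: (split _) => i'; case: (split _) => j' /= Hij.
- by exfalso; apply: Hij; rewrite (ord1 i') (ord1 j').
- apply: etrans (@block_mxEur _ 1 m 1 n _ _ _ _ i' j') _; by rewrite mul0mx mxE.
- apply: etrans (@block_mxEdl _ 1 m 1 n _ _ _ _ i' j') _; by rewrite mxE.
- apply: etrans (@block_mxEdr _ 1 m 1 n _ _ _ _ i' j') _.
  apply: dD3 => H; apply: Hij; by rewrite /= H.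
Qed.
End Smith.

Section Diag.
Variable S : comPzRingType.

Lemma rowv_choice p (P : 'I_p -> S -> Prop) :
  (forall i, exists r, P i r) -> exists z : 'rV[S]_p, forall i, P i (z 0 i).
Proof.
move=> H; have [M HM] := mx_choice2 (P := fun (_ : 'I_1) i r => P i r) (fun _ i => H i).
by exists M => i; apply: HM.
Qed.

Lemma diag_im p (e : 'rV[S]_p) (x : 'rV[S]_p) :
  (exists z, x = z *m diag_mx e) <-> forall i, exists r, x 0 i = r * e 0 i.
Proof.
split.
- by move=> [z ->] i; exists (z 0 i); rewrite mul_mx_diag mxE.
- move=> H; have [z Hz] := rowv_choice H; exists z.
  by apply/rowP => i; rewrite mul_mx_diag mxE Hz.
Qed.

Lemma diag_ker0 p (e : 'rV[S]_p) (x : 'rV[S]_p) :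
  x *m diag_mx e = 0 <-> forall i, x 0 i * e 0 i = 0.
Proof.
rewrite mul_mx_diag; split.
- by move=> H i; move/matrixP: H => /(_ 0 i); rewrite !mxE.
- by move=> H; apply/rowP => i; rewrite !mxE H.
Qed.

Lemma diag_ker p (e g : 'rV[S]_p) :
  (forall i x, x * e 0 i = 0 <-> exists r, x = r * g 0 i) ->
  isker (diag_mx e) (diag_mx g).
Proof.
move=> H x; rewrite diag_ker0 diag_im; split.
- by move=> Hx i; apply/H.
- by move=> Hx i; apply/H.
Qed.

Definition dg p q (D : 'M[S]_(p,q)) (i : 'I_p) := \sum_(j < q | (i : nat) == j) D i j.

Lemma dgE p q (D : 'M[S]_(p,q)) (i : 'I_p) (j : 'I_q) : (i : nat) = j -> dg D i = D i j.
Proof.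
move=> ij; rewrite /dg (bigD1 j) /=; last by apply/eqP.
rewrite big1 ?addr0 // => j' /andP [/eqP ij' nj']; exfalso.
by move/negP: nj'; apply; apply/eqP/val_inj; rewrite /= -ij' ij.
Qed.

Lemma dg0 p q (D : 'M[S]_(p,q)) (i : 'I_p) : (forall j : 'I_q, (i : nat) <> j) -> dg D i = 0.
Proof. by move=> H; rewrite /dg big1 // => j /eqP /H. Qed.

Lemma ker_diag p q (D : 'M[S]_(p,q)) : diagmx D ->
  forall y : 'rV[S]_p, y *m D = 0 <-> forall i, y 0 i * dg D i = 0.
Proof.
move=> dD y.
have E1 (i : 'I_p) (j : 'I_q) : (i : nat) = j -> (y *m D) 0 j = y 0 i * D i j.
  move=> ij; rewrite mxE (bigD1 i) //= big1 ?addr0 // => i' ni'.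
  rewrite dD ?mulr0 // => H; move/negP: ni'; apply; apply/eqP/val_inj.
  by rewrite /= H ij.
have E2 (j : 'I_q) : (forall i : 'I_p, (i : nat) <> j) -> (y *m D) 0 j = 0.
  by move=> H; rewrite mxE big1 // => i _; rewrite dD ?mulr0.
split.
- move=> H i.
  have [[j ij]|N] := pselect (exists j : 'I_q, (i : nat) = j).
    by rewrite (dgE D ij) -(E1 _ _ ij) H mxE.
  by rewrite dg0 ?mulr0 // => j ij; apply: N; exists j.
- move=> H; apply/rowP => j; rewrite [RHS]mxE.
  have [[i ij]|N] := pselect (exists i : 'I_p, (i : nat) = j).
    by rewrite (E1 _ _ ij) -(dgE D ij) H.
  by rewrite E2 // => i ij; apply: N; exists i.
Qed.

End Diag.

Section Local.
Variable S : comPzRingType.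
Hypothesis tot : forall a b : S, (exists r, a = r * b) \/ (exists r, b = r * a).

Lemma fun_choice (I : Type) (P : I -> S -> Prop) :
  (forall i, exists r, P i r) -> exists f : I -> S, forall i, P i (f i).
Proof.
move=> H; exists (fun i => projT1 (cid (H i))) => i; exact: projT2 (cid (H i)).
Qed.

Lemma local_L p q r (B : 'M[S]_(p,q)) (C : 'M[S]_(r,p)) : isker B C -> kerfg C.
Proof.
move=> HBC.
have [P [Q [[P' [PP' P'P]] [Q' [QQ' Q'Q]] dD]]] := smith tot B.
set D := P *m B *m Q in dD.
have kD : forall y : 'rV_p, y *m D = 0 <-> exists z : 'rV_r, y = z *m (C *m P').
  move=> y; split.
  - move=> yD; have : (y *m P) *m B = 0.
      have yD' : y *m P *m B *m Q = 0 by rewrite -yD /D !mulmxA.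
      by rewrite -[_ *m B]mulmx1 -QQ' mulmxA yD' mul0mx.
    move/HBC => [z Hz]; exists z; by rewrite mulmxA -Hz -mulmxA PP' mulmx1.
  - move=> [z ->]; rewrite /D !mulmxA -(mulmxA (z *m C) P' P) P'P mulmx1.
    have -> : z *m C *m B = 0 by apply/HBC; exists z.
    by rewrite mul0mx.
pose G := C *m P'.
have annD : forall i a, a * dg D i = 0 <->
    exists z : 'I_r -> S, a = \sum_(l < r) z l * G l i.
  move=> i a; split.
  - move=> ad.
    have : (a *: (delta_mx 0 i : 'rV_p)) *m D = 0.
      apply: (proj2 (ker_diag dD _)) => i'; rewrite !mxE.
      case: (eqVneq i' i) => [->|ne]; first by rewrite ?eqxx mulr1.
      by rewrite ?andbF mulr0 mul0r.
    move/kD => [z Hz]; exists (fun l => z 0 l).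
    move/rowP: Hz => /(_ i); rewrite !mxE !eqxx mulr1 => ->.
    by [].
  - move=> [z ->].
    have : (\row_l z l) *m G *m D = 0 by apply/kD; exists (\row_l z l).
    move/(ker_diag dD) => /(_ i); rewrite mxE.
    by under eq_bigr do rewrite mxE.
have [e He] := fun_choice (fun i => princ tot (fun l => G l i)).
have [g Hg] : exists g : 'I_p -> S, forall i x, x * e i = 0 <-> exists r, x = r * g i.
  apply: (fun_choice (P := fun i gi => forall x, x * e i = 0 <-> exists r, x = r * gi)).
  move=> i; apply: (ann_ann tot (d := dg D i)) => x.
  by rewrite annD He.
pose er : 'rV_p := \row_i e i.
pose gr : 'rV_p := \row_i g i.
apply: (@kerfg_im _ _ _ _ C (diag_mx er *m P)).
- move=> x; rewrite -HBC.
  have -> : (x *m B = 0) <-> (x *m P') *m D = 0.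
    rewrite /D !mulmxA -(mulmxA x) P'P mulmx1; split; first by move=> ->; rewrite !mul0mx.
    by move=> H; rewrite -[x *m B]mulmx1 -QQ' mulmxA H mul0mx.
  rewrite (ker_diag dD); split.
  + move=> H; have /diag_im [z Hz] : forall i, exists r, (x *m P') 0 i = r * er 0 i.
      by move=> i; rewrite [er _ _]mxE; apply/He/annD; apply: H.
    by exists z; rewrite mulmxA -Hz -mulmxA P'P mulmx1.
  + move=> [z ->] i; rewrite mulmxA -(mulmxA _ P) PP' mulmx1.
    have /diag_im /(_ i) [s ->] : exists z', z *m diag_mx er = z' *m diag_mx er by exists z.
    rewrite mxE -mulrA; have -> : e i * dg D i = 0; last by rewrite mulr0.
    by apply/annD/He; exists 1; rewrite mul1r.
- exists p, (diag_mx gr) => x; split.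
  + move=> H.
    have Hd : isker (diag_mx er) (diag_mx gr).
      by apply: diag_ker => i y; rewrite !mxE; apply: Hg.
    apply/Hd; rewrite -[x *m _]mulmx1 -PP' mulmxA -(mulmxA x) H mul0mx //.
  + move=> H; rewrite mulmxA; have -> : x *m diag_mx er = 0; last by rewrite mul0mx.
    have Hd : isker (diag_mx er) (diag_mx gr).
      by apply: diag_ker => i y; rewrite !mxE; apply: Hg.
    exact/Hd.
Qed.
End Local.

Lemma isker_CB (R : comPzRingType) p q r (B : 'M[R]_(p,q)) (C : 'M[R]_(r,p)) :
  isker B C -> C *m B = 0.
Proof.
move=> H; apply/row_matrixP => i; rewrite row_mul row0; apply/H.
by exists (delta_mx 0 i); rewrite -rowE.
Qed.

Lemma max_prime (R : comPzRingType) (M : R -> Prop) : is_maximal_ideal M ->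
  forall a b, ~ M a -> ~ M b -> ~ M (a * b).
Proof.
move=> [[M0 MD MM] M1 Mmax] a b Ma Mb Mab.
pose J x := exists m r, M m /\ x = m + r * a.
have iJ : is_ideal J.
  split.
  - by exists 0, 0; rewrite mul0r addr0.
  - move=> x y [m [r [Mm ->]]] [m' [r' [Mm' ->]]].
    exists (m + m'), (r + r'); split; first exact: MD.
    by rewrite mulrDl addrACA.
  - move=> s x [m [r [Mm ->]]]; exists (s * m), (s * r); split; first exact: MM.
    by rewrite mulrDr mulrA.
have J1 : J 1.
  apply: contrapT => nJ; apply: Ma; apply: (Mmax J iJ) => //.
  - by move=> x Mx; exists x, 0; rewrite mul0r addr0.
  - by exists 0, 1; rewrite add0r mul1r.
have [m [r [Mm E]]] := J1; apply: Mb.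
have -> : b = b * m + r * (a * b).
  by rewrite -{1}[b]mulr1 E mulrDr; congr (_ + _); rewrite mulrCA [b * a]mulrC.
by apply: MD; apply: MM.
Qed.

Lemma max_1 (R : comPzRingType) (M : R -> Prop) : is_maximal_ideal M -> ~ M 1.
Proof. by case. Qed.

Lemma max_prod (R : comPzRingType) (M : R -> Prop) (I : finType) (f : I -> R) :
  is_maximal_ideal M -> (forall i, ~ M (f i)) -> ~ M (\prod_i f i).
Proof.
move=> HM Hf; elim/big_rec: _ => [|i x _ Hx]; first exact: max_1.
exact: max_prime.
Qed.

Section Loc.
Variables (R S : comPzRingType) (M : R -> Prop) (phi : {rmorphism R -> S}).
Hypothesis HM : is_maximal_ideal M.
Hypothesis Hloc : is_localization_at M phi.

Lemma fchoice (I : Type) (T : Type) (P : I -> T -> Prop) :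
  (forall i, exists r, P i r) -> exists f : I -> T, forall i, P i (f i).
Proof.
move=> H; exists (fun i => projT1 (cid (H i))) => i; exact: projT2 (cid (H i)).
Qed.

Lemma den_mx m n (A : 'M[S]_(m,n)) :
  exists t (c : 'M[R]_(m,n)), ~ M t /\ phi t *: A = map_mx phi c.
Proof.
case: Hloc => _ H2 _.
have [a Ha] := fchoice (fun (k : 'I_m * 'I_n) => H2 (A k.1 k.2)).
have [s Hs] := fchoice (P := fun k s => ~ M s /\ A k.1 k.2 * phi s = phi (a k)) Ha.
exists (\prod_k s k), (\matrix_(i, j) (a (i, j) * \prod_(k | k != (i, j)) s k)).
split; first by apply: max_prod => // k; case: (Hs k).
apply/matrixP => i j; rewrite !mxE (bigD1 (i, j)) //= rmorphM rmorphM.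
case: (Hs (i, j)) => _ /= <-.
by rewrite rmorph_prod mulrC -!mulrA [phi (s _) * _]mulrC.
Qed.

Lemma zero_mx m n (A : 'M[R]_(m,n)) :
  map_mx phi A = 0 -> exists u, ~ M u /\ u *: A = 0.
Proof.
case: Hloc => _ _ H3 HA.
have H k : exists u, ~ M u /\ u * A k.1 k.2 = 0.
  apply: H3; by move/matrixP: HA => /(_ k.1 k.2); rewrite !mxE.
have [u Hu] := fchoice H.
exists (\prod_k u k); split; first by apply: max_prod => // k; case: (Hu k).
apply/matrixP => i j; rewrite !mxE (bigD1 (i, j)) //= -mulrA [_ * A i j]mulrC mulrA.
by case: (Hu (i, j)) => _ /= ->; rewrite ?mulr0 ?mul0r.
Qed.

Lemma unit_phi t : ~ M t -> exists w, phi t * w = 1.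
Proof. by case: Hloc => H1 _ _; apply: H1. Qed.

Lemma flat p q r (B : 'M[R]_(p,q)) (C : 'M[R]_(r,p)) :
  isker B C -> isker (map_mx phi B) (map_mx phi C).
Proof.
move=> HBC x; split.
- move=> xB.
  have [t [c [Mt Hc]]] := den_mx x.
  have : map_mx phi (c *m B) = 0.
    by rewrite map_mxM -Hc -scalemxAl xB scaler0.
  move/zero_mx => [u [Mu Hu]].
  have : (u *: c) *m B = 0 by rewrite -scalemxAl.
  move/HBC => [z Hz].
  have [w Hw] := unit_phi (max_prime HM Mu Mt).
  exists (w *: map_mx phi z).
  rewrite -scalemxAl -map_mxM -Hz map_mxZ -Hc scalerA scalerA -mulrA -rmorphM.
  by rewrite [w * _]mulrC Hw scale1r.
- move=> [z ->]; by rewrite -mulmxA -map_mxM (isker_CB HBC) map_mx0 mulmx0.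
Qed.

Lemma kerfg_map p q (B : 'M[R]_(p,q)) : kerfg B -> kerfg (map_mx phi B).
Proof. by move=> [r [C H]]; exists r, (map_mx phi C); apply: flat. Qed.

Definition loc_kerfg (T : comPzRingType) (N : T -> Prop) p q (C : 'M[T]_(p,q)) :=
  exists s (H : 'M[T]_(s,p)), H *m C = 0 /\
    forall x : 'rV_p, x *m C = 0 -> exists t, ~ N t /\ exists z, t *: x = z *m H.

Lemma pullback p q (C : 'M[R]_(p,q)) : kerfg (map_mx phi C) -> loc_kerfg M C.
Proof.
move=> [s [G HG]].
have [t [H0 [Mt Ht]]] := den_mx G.
have : map_mx phi (H0 *m C) = 0.
  by rewrite map_mxM -Ht -scalemxAl (isker_CB HG) scaler0.
move/zero_mx => [u [Mu Hu]].
exists s, (u *: H0); split; first by rewrite -scalemxAl.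
move=> x xC.
have : map_mx phi x *m map_mx phi C = 0 by rewrite -map_mxM xC map_mx0.
move/HG => [z Hz].
have [v [y [Mv Hy]]] := den_mx z.
have E : map_mx phi ((v * u * t) *: x - y *m (u *: H0)) = 0.
  rewrite map_mxB map_mxZ Hz map_mxM -Hy map_mxZ -scalemxAl -Ht.
  rewrite !rmorphM -!scalerA scalemxAr scalemxAr.
  by rewrite [phi u *: (phi t *: _)]scalerA [phi u * _]mulrC -scalerA subrr.
have [w [Mw Hw]] := zero_mx E.
exists (w * (v * u * t)); split.
  by apply: (max_prime HM) => //; apply: (max_prime HM) => //; apply: (max_prime HM).
exists (w *: y); move: Hw; rewrite scalerBr scalerA -scalemxAl.
by move/eqP; rewrite subr_eq0 => /eqP.
Qed.

End Loc.

Lemma val_tot (S : comPzRingType) : valuation_ring S ->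
  forall a b : S, (exists r, a = r * b) \/ (exists r, b = r * a).
Proof.
move=> HV a b.
have pI (c : S) : is_ideal (fun x => exists r, x = r * c).
  split; first by exists 0; rewrite mul0r.
  - by move=> x y [r ->] [r' ->]; exists (r + r'); rewrite mulrDl.
  - by move=> s x [r ->]; exists (s * r); rewrite mulrA.
have [H|H] := HV _ _ (pI a) (pI b).
- by left; apply: H; exists 1; rewrite mul1r.
- by right; apply: H; exists 1; rewrite mul1r.
Qed.

Section LG.
Variable R : comPzRingType.

Lemma ideal_in_max (J : R -> Prop) : is_ideal J -> ~ J 1 ->
  exists M, is_maximal_ideal M /\ forall x, J x -> M x.
Proof.
move=> iJ J1.
pose T := {I : R -> Prop | [/\ is_ideal I, ~ I 1 & forall x, J x -> I x]}.
pose t0 : T := exist _ J (And3 iJ J1 (fun x h => h)).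
pose Rl := fun s t : T => `[< forall x, sval s x -> sval t x >].
have [t Ht] : exists t, premaximal Rl t.
  apply: (@ZL_preorder T t0 Rl).
- by move=> s; apply/asboolP.
- by move=> r s u /asboolP H1 /asboolP H2; apply/asboolP => x /H1 /H2.
- move=> A tA.
  have [[s0 As0]|N] := pselect (exists s, A s); last first.
    by exists t0 => s As; exfalso; apply: N; exists s.
  pose U x := exists s, A s /\ sval s x.
  have iU : [/\ is_ideal U, ~ U 1 & forall x, J x -> U x].
    split.
    - split.
      + by exists s0; split => //; case: (svalP s0) => [[I0 _ _] _ _].
      + move=> x y [s [As sx]] [s' [As' s'y]].
        have [/asboolP H|/asboolP H] := tA _ _ As As'.
        * exists s'; split => //; case: (svalP s') => [[_ D _]] _ _; apply: D => //; exact: H.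
        * exists s; split => //; case: (svalP s) => [[_ D _]] _ _; apply: D => //; exact: H.
      + rewrite /U => r x [s [As sx]]; exists s; split => //.
        by case: (svalP s) => [[_ _ Mu]] _ _; apply: Mu.
    - by move=> [s [As s1]]; case: (svalP s) => _ /(_ s1).
    - by move=> x Jx; exists s0; split => //; case: (svalP s0) => _ _; apply.
  exists (exist _ U iU) => s As; apply/asboolP => x sx; by exists s.
exists (sval t); case: (svalP t) => it t1 Jt; split => //; split => //.
move=> K iK tK K1 x Kx.
have iK' : [/\ is_ideal K, ~ K 1 & forall x, J x -> K x].
  by split => // y /Jt /tK.
have /asboolP H := Ht (exist _ K iK') (introT (asboolP _) tK).
exact: H.
Qed.

Lemma local_global (n : nat) (Ms : 'I_n -> R -> Prop) p q (C : 'M[R]_(p,q)) :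
  (forall M, is_maximal_ideal M -> exists i, forall x, M x <-> Ms i x) ->
  (forall M, is_maximal_ideal M -> loc_kerfg M C) -> kerfg C.
Proof.
move=> HMs Hloc.
have [s [H [HC HH]]] : exists s (H : 'M[R]_(s,p)), H *m C = 0 /\
   forall i, is_maximal_ideal (Ms i) -> forall x : 'rV_p, x *m C = 0 ->
     exists t, ~ Ms i t /\ exists z, t *: x = z *m H.
  clear HMs; elim: n Ms => [|n IH] Ms.
    by exists 0%N, 0; split; [rewrite mul0mx | move=> [] ].
  have [s1 [H1 [H1C HH1]]] := IH (fun i => Ms (lift ord0 i)).
  have [s0 [H0 [H0C HH0]]] : exists s0 (H0 : 'M[R]_(s0,p)), H0 *m C = 0 /\
      (is_maximal_ideal (Ms ord0) -> forall x : 'rV_p, x *m C = 0 ->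
       exists t, ~ Ms ord0 t /\ exists z, t *: x = z *m H0).
    have [Mx|NM] := pselect (is_maximal_ideal (Ms ord0)).
      have [s0 [H0 [H0C HH0]]] := Hloc _ Mx.
      by exists s0, H0; split.
    by exists 0%N, 0; split; [rewrite mul0mx | move=> /NM].
  exists (s0 + s1)%N, (col_mx H0 H1); split; first by rewrite mul_col_mx H0C H1C col_mx0.
  move=> i; case: (unliftP ord0 i) => [i' ->|->] Mi x xC.
  - have [t [Mt [z Hz]]] := HH1 i' Mi x xC.
    by exists t; split => //; exists (row_mx 0 z); rewrite mul_row_col mul0mx add0r.
  - have [t [Mt [z Hz]]] := HH0 Mi x xC.
    by exists t; split => //; exists (row_mx z 0); rewrite mul_row_col mul0mx addr0.
exists s, H => x; split; last first.
  by move=> [z ->]; rewrite -mulmxA HC mulmx0.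
move=> xC.
pose J r := exists z, r *: x = z *m H.
have iJ : is_ideal J.
  split.
  - by exists 0; rewrite scale0r mul0mx.
  - by move=> a b [z Hz] [z' Hz']; exists (z + z'); rewrite scalerDl Hz Hz' mulmxDl.
  - by move=> r a [z Hz]; exists (r *: z); rewrite -scalerA Hz scalemxAl.
have [[z Hz]|N1] := pselect (J 1); first by exists z; rewrite -Hz scale1r.
have [M [HM JM]] := ideal_in_max iJ N1.
have [i Hi] := HMs M HM.
have EM : M = Ms i by apply: funext => y; apply: propext; apply: Hi.
rewrite EM in HM JM.
have [t [Mt Jt]] := HH i HM x xC.
by exfalso; apply: Mt; apply: JM.
Qed.

End LG.

Module Locz.
Local Open Scope quotient_scope.
Section Locz.
Variables (R : comPzRingType) (M : R -> Prop).
Hypothesis HM : is_maximal_ideal M.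

Definition good (p : R * R) : bool := `[< ~ M p.2 >].
Definition T := {p : R * R | good p}.

Lemma good1 : good (0, 1).
Proof. by apply/asboolP => /= ; apply: max_1 HM. Qed.
Definition t1 : T := exist _ (0, 1) good1.
Definition Mk (a s : R) : T := insubd t1 (a, s).
Lemma MkE a s : ~ M s -> val (Mk a s) = (a, s).
Proof. by move=> H; rewrite /Mk insubdK //; apply/asboolP. Qed.
Lemma goodP (x : T) : ~ M (val x).2.
Proof. by case: x => p /= /asboolP. Qed.

Definition eqv (x y : T) : bool :=
  `[< exists u, ~ M u /\ u * ((val x).1 * (val y).2 - (val y).1 * (val x).2) = 0 >].

Lemma eqv_refl : reflexive eqv.
Proof. by move=> x; apply/asboolP; exists 1; split; [apply: max_1 HM| rewrite subrr mulr0]. Qed.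

Lemma eqv_sym : symmetric eqv.
Proof.
move=> x y; apply/asboolP/asboolP => [] [u [Mu Hu]]; exists u; split => //;
  by rewrite -opprB mulrN Hu oppr0.
Qed.

Lemma eqv_trans : transitive eqv.
Proof.
move=> y x z /asboolP [u [Mu Hu]] /asboolP [v [Mv Hv]]; apply/asboolP.
exists (u * v * (val y).2); split.
  by apply: (max_prime HM); [apply: (max_prime HM)|apply: (goodP (x:=y))].
set x1 := (val x).1; set x2 := (val x).2; set y1 := (val y).1; set y2 := (val y).2.
set z1 := (val z).1; set z2 := (val z).2.
rewrite -/x1 -/x2 -/y1 -/y2 -/z1 -/z2 in Hu Hv.
have -> : u * v * y2 * (x1 * z2 - z1 * x2) =
  v * z2 * (u * (x1 * y2 - y1 * x2)) + u * x2 * (v * (y1 * z2 - z1 * y2)) by ring.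
by rewrite Hu Hv !mulr0 addr0.
Qed.

Canonical eqv_equiv := EquivRel eqv eqv_refl eqv_sym eqv_trans.
Definition Q := {eq_quot eqv}.
HB.instance Definition _ : EqQuotient _ eqv Q := EqQuotient.on Q.
HB.instance Definition _ := Choice.on Q.

Lemma piP (x y : T) : \pi_Q x = \pi_Q y <->
  exists u, ~ M u /\ u * ((val x).1 * (val y).2 - (val y).1 * (val x).2) = 0.
Proof.
split; first by move/eqmodP; rewrite /= => /asboolP.
by move=> H; apply/eqmodP; rewrite /=; apply/asboolP.
Qed.

Lemma eq_pi (x y : T) : (val x).1 * (val y).2 = (val y).1 * (val x).2 -> \pi_Q x = \pi_Q y.
Proof.
move=> H; apply/piP; exists 1; split; first exact: max_1 HM.
by rewrite H subrr mulr0.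
Qed.

Lemma reprP (x : T) : exists u, ~ M u /\
  u * ((val (repr (\pi_Q x))).1 * (val x).2 - (val x).1 * (val (repr (\pi_Q x))).2) = 0.
Proof. by apply/piP; rewrite reprK. Qed.

Lemma good_mul (x y : T) : ~ M ((val x).2 * (val y).2).
Proof. exact: (max_prime HM (goodP (x:=x)) (goodP (x:=y))). Qed.

Definition addf (x y : T) : T :=
  Mk ((val x).1 * (val y).2 + (val y).1 * (val x).2) ((val x).2 * (val y).2).
Definition oppf (x : T) : T := Mk (- (val x).1) (val x).2.
Definition mulf (x y : T) : T := Mk ((val x).1 * (val y).1) ((val x).2 * (val y).2).

Lemma addfE x y : val (addf x y) =
  ((val x).1 * (val y).2 + (val y).1 * (val x).2, (val x).2 * (val y).2).
Proof. exact: MkE (@good_mul x y). Qed.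
Lemma oppfE x : val (oppf x) = (- (val x).1, (val x).2).
Proof. exact: MkE (@goodP x). Qed.
Lemma mulfE x y : val (mulf x y) = ((val x).1 * (val y).1, (val x).2 * (val y).2).
Proof. exact: MkE (@good_mul x y). Qed.
Lemma MkE' a s : ~ M s -> (val (Mk a s)).1 = a /\ (val (Mk a s)).2 = s.
Proof. by move=> /MkE ->. Qed.

Definition add := lift_op2 Q addf.
Lemma pi_add : {morph \pi : x y / addf x y >-> add x y}.
Proof.
move=> x y; unlock add; apply/piP.
have [u [Mu Hu]] := reprP x; have [v [Mv Hv]] := reprP y.
exists (u * v); split; first exact: (max_prime HM Mu Mv).
rewrite !addfE /=.
move: Hu Hv; set x1 := (val x).1; set x2 := (val x).2; set y1 := (val y).1; set y2 := (val y).2.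
set a1 := (val _).1; set a2 := (val _).2; set b1 := (val _).1; set b2 := (val _).2.
move=> Hu Hv.
have -> : u * v * ((x1 * y2 + y1 * x2) * (a2 * b2) - (a1 * b2 + b1 * a2) * (x2 * y2)) =
  - (v * b2 * y2 * (u * (a1 * x2 - x1 * a2)) + u * a2 * x2 * (v * (b1 * y2 - y1 * b2))) by ring.
by rewrite Hu Hv !mulr0 addr0 oppr0.
Qed.
Canonical pi_add_morph := PiMorph2 pi_add.

Definition opp := lift_op1 Q oppf.
Lemma pi_opp : {morph \pi : x / oppf x >-> opp x}.
Proof.
move=> x; unlock opp; apply/piP.
have [u [Mu Hu]] := reprP x; exists u; split => //.
rewrite !oppfE /= -[RHS]Hu; ring.
Qed.
Canonical pi_opp_morph := PiMorph1 pi_opp.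

Definition mul := lift_op2 Q mulf.
Lemma pi_mul : {morph \pi : x y / mulf x y >-> mul x y}.
Proof.
move=> x y; unlock mul; apply/piP.
have [u [Mu Hu]] := reprP x; have [v [Mv Hv]] := reprP y.
exists (u * v); split; first exact: (max_prime HM Mu Mv).
rewrite !mulfE /=.
move: Hu Hv; set x1 := (val x).1; set x2 := (val x).2; set y1 := (val y).1; set y2 := (val y).2.
set a1 := (val _).1; set a2 := (val _).2; set b1 := (val _).1; set b2 := (val _).2.
move=> Hu Hv.
have -> : u * v * ((x1 * y1) * (a2 * b2) - (a1 * b1) * (x2 * y2)) =
  - (v * b1 * y2 * (u * (a1 * x2 - x1 * a2)) + u * x1 * a2 * (v * (b1 * y2 - y1 * b2))) by ring.
by rewrite Hu Hv !mulr0 addr0 oppr0.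
Qed.
Canonical pi_mul_morph := PiMorph2 pi_mul.

Definition zero : Q := \pi_Q (Mk 0 1).
Definition one : Q := \pi_Q (Mk 1 1).

Lemma M1 : ~ M 1. Proof. exact: max_1 HM. Qed.

Lemma addA : associative add.
Proof.
elim/quotW=> x; elim/quotW=> y; elim/quotW=> z; rewrite !piE; apply: eq_pi.
rewrite !addfE /=; ring.
Qed.

Lemma addC : commutative add.
Proof.
elim/quotW=> x; elim/quotW=> y; rewrite !piE; apply: eq_pi.
rewrite !addfE /=; ring.
Qed.

Lemma add0 : left_id zero add.
Proof.
elim/quotW=> x; rewrite /zero !piE; apply: eq_pi.
rewrite !addfE /=; have [-> ->] := MkE' 0 M1; ring.
Qed.

Lemma addN : left_inverse zero opp add.
Proof.
elim/quotW=> x; rewrite /zero !piE; apply: eq_pi.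
rewrite !addfE /= !oppfE /=; have [-> ->] := MkE' 0 M1; ring.
Qed.

HB.instance Definition _ := GRing.isZmodule.Build Q addA addC add0 addN.

Lemma mulA : associative mul.
Proof.
elim/quotW=> x; elim/quotW=> y; elim/quotW=> z; rewrite !piE; apply: eq_pi.
rewrite !mulfE /=; ring.
Qed.

Lemma mulC : commutative mul.
Proof.
elim/quotW=> x; elim/quotW=> y; rewrite !piE; apply: eq_pi.
rewrite !mulfE /=; ring.
Qed.

Lemma mul1 : left_id one mul.
Proof.
elim/quotW=> x; rewrite /one !piE; apply: eq_pi.
rewrite !mulfE /=; have [-> ->] := MkE' 1 M1; ring.
Qed.

Lemma mulDl : left_distributive mul add.
Proof.
elim/quotW=> x; elim/quotW=> y; elim/quotW=> z; rewrite !piE.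
apply/piP; exists 1; split; first exact: M1.
rewrite !mulfE /= !addfE /= ?mulfE /=.
rewrite mul1r; apply/eqP; rewrite subr_eq0; apply/eqP; ring.
Qed.

HB.instance Definition _ := GRing.Zmodule_isComPzRing.Build Q mulA mulC mul1 mulDl.

Lemma mulE (x y : T) : (\pi_Q x : Q) * \pi_Q y = \pi_Q (mulf x y).
Proof. exact: esym (pi_mul x y). Qed.
Lemma addE (x y : T) : (\pi_Q x : Q) + \pi_Q y = \pi_Q (addf x y).
Proof. exact: esym (pi_add x y). Qed.
Lemma oppE (x : T) : - (\pi_Q x : Q) = \pi_Q (oppf x).
Proof. exact: esym (pi_opp x). Qed.

Definition phi (a : R) : Q := \pi_Q (Mk a 1).

Lemma phi_zmod : zmod_morphism phi.
Proof.
move=> x y; rewrite /phi oppE addE; apply: eq_pi.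
rewrite addfE /= oppfE /=; have [-> ->] := MkE' x M1; have [-> ->] := MkE' y M1.
have [-> ->] := MkE' (x - y) M1; ring.
Qed.
HB.instance Definition _ := GRing.isZmodMorphism.Build R Q phi phi_zmod.

Lemma phi_monoid : monoid_morphism phi.
Proof.
split => // x y; rewrite /phi mulE; apply: eq_pi.
rewrite mulfE /=; have [-> ->] := MkE' x M1; have [-> ->] := MkE' y M1.
have [-> ->] := MkE' (x * y) M1; ring.
Qed.
HB.instance Definition _ := GRing.isMonoidMorphism.Build R Q phi phi_monoid.

Lemma loc : is_localization_at M (phi : {rmorphism R -> Q}).
Proof.
split.
- move=> s Ms; exists (\pi_Q (Mk 1 s)); rewrite /= /phi mulE.
  change (\pi_Q (mulf (Mk s 1) (Mk 1 s)) = \pi_Q (Mk 1 1)); apply: eq_pi.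
  rewrite mulfE /=; have [-> ->] := MkE' s M1; have [-> ->] := MkE' 1 Ms.
  have [-> ->] := MkE' 1 M1; ring.
- elim/quotW => x; exists (val x).1, (val x).2; split; first exact: (@goodP x).
  rewrite /= /phi mulE; apply: eq_pi.
  rewrite mulfE /=; have [-> ->] := MkE' (val x).2 M1; have [-> ->] := MkE' (val x).1 M1.
  ring.
- move=> a; rewrite /= /phi.
  change (\pi_Q (Mk a 1) = \pi_Q (Mk 0 1) -> exists s, ~ M s /\ s * a = 0).
  move/piP => [u [Mu Hu]]; exists u; split => //.
  move: Hu; have [-> ->] := MkE' a M1; have [-> ->] := MkE' 0 M1.
  by rewrite mulr1 mul0r subr0.
Qed.

End Locz.
End Locz.
HB.export Locz.

Lemma exists_loc (R : comPzRingType) (M : R -> Prop) : is_maximal_ideal M ->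
  exists (S : comPzRingType) (phi : {rmorphism R -> S}), is_localization_at M phi.
Proof. move=> HM; exists (Locz.Q HM : comPzRingType), (Locz.phi HM : {rmorphism _ -> _}); exact: Locz.loc. Qed.

Lemma mx11_eq0 (T : comPzRingType) (x : 'M[T]_1) : x = 0 <-> x 0 0 = 0.
Proof.
split; first by move=> ->; rewrite mxE.
by move=> H; apply/matrixP => i j; rewrite (ord1 i) (ord1 j) H mxE.
Qed.

Lemma coherent_char (T : comPzRingType) :
  coherent T <-> forall k (a : 'cV[T]_k), kerfg a.
Proof.
split.
- move=> HC k a.
  pose I (x : T) := exists c : 'I_k -> T, x = \sum_(i < k) c i * a i 0.
  have fgI : fg_ideal I by exists k, (fun i => a i 0).
  have [k' [A [f [lf Pf sf H0 _]]]] := HC I fgI.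
  pose b : 'cV[T]_(k' 0) := \col_j (f (delta_mx 0 j) : T).
  have f0 : f 0 = 0.
    have := lf 1 0 0; rewrite !scale1r !addr0 => H.
    by have := congr1 (fun z => z - f 0) H; rewrite /= addrK subrr => <-.
  have fD : {morph f : u v / u + v}.
    by move=> u v; rewrite -[u in LHS]scale1r lf scale1r.
  have fZ c u : f (c *: u) = c * f u.
    by have := lf c u 0; rewrite addr0 f0 addr0.
  have fE x : f x = (x *m b) 0 0.
    rewrite [x in LHS]row_sum_delta (big_morph f fD f0) mxE /=.
    by apply: eq_bigr => j _; rewrite fZ !mxE.
  apply: (@kerfg_im _ _ _ _ a b).
  + move=> x; split.
    * move=> [z ->].
      have : I ((z *m a) 0 0) by exists (fun i => z 0 i); rewrite mxE.
      move/sf => [y Hy]; exists y; apply/matrixP => i j.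
      by rewrite (ord1 i) (ord1 j) -fE Hy.
    * move=> [z ->].
      have [c Hc] := Pf z.
      exists (\row_i c i); apply/matrixP => i j.
      by rewrite (ord1 i) (ord1 j) -fE Hc mxE; apply: eq_bigr => l _; rewrite mxE.
  + exists (k' 1%N), (A 0%N) => x; rewrite mx11_eq0 -fE; exact: H0.
- move=> H I [k [a0 Ha]].
  pose a : 'cV[T]_k := \col_i a0 i.
  have [r [C HC]] := H k a.
  pose kk (i : nat) := if i is 0 then k else r.
  pose A (i : nat) : 'M[T]_(kk i.+1, kk i) :=
    match i return 'M[T]_(kk i.+1, kk i) with 0 => C | _.+1 => 0 end.
  pose f (x : 'rV[T]_(kk 0)) : T^o := (x *m a) 0 0.
  exists kk, A, f; split.
  + move=> c u v; rewrite /f mulmxDl -scalemxAl !mxE; done.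
  + move=> x; apply/Ha; exists (fun i => x 0 i); rewrite /f mxE.
    by apply: eq_bigr => i _; rewrite mxE.
  + move=> y /Ha [c ->]; exists (\row_i c i); rewrite /f mxE.
    by apply: eq_bigr => i _; rewrite !mxE.
  + move=> _ x; rewrite /f -mx11_eq0; exact: HC.
  + by [].
Qed.

Lemma kerfg_scale (T : comPzRingType) p q (u w : T) (a : 'M[T]_(p,q)) :
  u * w = 1 -> kerfg (u *: a) -> kerfg a.
Proof.
move=> uw [r [G HG]]; exists r, G => x; rewrite -HG; split.
- by rewrite -scalemxAr => ->; rewrite scaler0.
- rewrite -scalemxAr => H; rewrite -[x *m a]scale1r -uw mulrC -scalerA H scaler0 //.
Qed.

Section Main.
Variable R : comPzRingType.
Hypothesis Hsl : semi_local R.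
Hypothesis Har : arithmetic R.

Lemma global_L p q r (B : 'M[R]_(p,q)) (C : 'M[R]_(r,p)) : isker B C -> kerfg C.
Proof.
move=> HBC; have [n [Ms HMs]] := Hsl.
apply: (local_global HMs) => M HM.
have [S [phi Hloc]] := exists_loc HM.
have tot := val_tot (Har HM Hloc).
apply: (pullback HM Hloc).
apply: (local_L tot (B := map_mx phi B)).
exact: (flat HM Hloc HBC).
Qed.

Record st := St { sm : nat; sn : nat; sp : nat;
  sB : 'M[R]_(sn, sm); sC : 'M[R]_(sp, sn); sH : isker sB sC }.

Definition step (s : st) : st :=
  let e := cid (global_L (@sH s)) in
  let e2 := cid (projT2 e) in
  @St (sn s) (sp s) (projT1 e) (sC s) (projT1 e2) (projT2 e2).

Lemma lambda_part : lambda_dim_le R 2.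
Proof.
exists 2%N; split => // E [k0 [A0 [f [lf Pf sf H0 H1]]]].
pose s0 := @St (k0 0%N) (k0 1%N) (k0 2%N) (A0 0%N) (A0 1%N) (H1 0%N isT).
pose seqs (i : nat) := iter i step s0.
pose k (i : nat) := sm (seqs i).
pose A (i : nat) : 'M[R]_(k i.+1, k i) := sB (seqs i).
move=> n; exists k, A, f; split => //.
- by move=> _; exact: H0.
- move=> i _ x; exact: (@sH (seqs i) x).
Qed.

End Main.

Theorem corollary2p12 (R : comPzRingType) :
  semi_local R -> arithmetic R ->
  lambda_dim_le R 2 /\
  (coherent R <->
   forall M : R -> Prop, is_maximal_ideal M ->
     forall (S : comPzRingType) (phi : {rmorphism R -> S}),
       is_localization_at M phi -> coherent S).
Proof.
move=> Hsl Har; split; first exact: lambda_part.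
split.
- move=> /coherent_char HR M HM S phi Hloc; apply/coherent_char => k a.
  have [t [c [Mt Hc]]] := den_mx HM Hloc a.
  have [w Hw] := unit_phi Hloc Mt.
  apply: (kerfg_scale Hw); rewrite Hc; exact: (kerfg_map HM Hloc (HR _ c)).
- move=> H; apply/coherent_char => k a.
  have [n [Ms HMs]] := Hsl.
  apply: (local_global HMs) => M HM.
  have [S [phi Hloc]] := exists_loc HM.
  apply: (pullback HM Hloc).
  exact: (proj1 (coherent_char S) (H M HM S phi Hloc)).
Qed.
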